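(* Let $m$ balls be placed independently and uniformly at random into $n$ bins, where $m=\Theta(n)$, and let $\mu = m/n$. Let $x>1$ and $k\ge 1$. Then with probability $1-2^{-\Omega(k)}$ there does not exist any $i$ such that the first $i$ bins contain at least $(1+1/x)\, i\mu + kx$ balls.
   Context: The bins are indexed $1,\dots,n$; ''the first $i$ bins'' means bins $1,\dots,i$. The constant in $\Omega(k)$ does not depend on $x,k,n$. *)

(* Defs.v *)
From HB Require Import structures.
From mathcomp Require Import all_boot all_order all_algebra.
From mathcomp Require Import reals exp.
Set Implicit Arguments. Unset Strict Implicit. Unset Printing Implicit Defensive.
Import Order.TTheory GRing.Theory Num.Theory.
Local Open Scope ring_scope.

(* An outcome of throwing m balls into n bins: ball b (in 'I_m) lands in bin f b
   (in 'I_n).  Bins 1..n of the paper are the ordinals 0..n-1 here, so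
   "the first i bins" = bins with index < i. *)
Definition load (n m : nat) (f : {ffun 'I_m -> 'I_n}) (i : nat) : nat :=
  #|[set b : 'I_m | (f b < i)%N]|.

Definition bad_event (R : realType) (n m : nat) (x k : R) :
    {set {ffun 'I_m -> 'I_n}} :=
  [set f | [exists i : 'I_n.+1,
     (1 + x^-1) * (i%:R * (m%:R / n%:R)) + k * x <= (load f i)%:R]].

Definition bad_prob (R : realType) (n m : nat) (x k : R) : R :=
  (#|bad_event n m x k|)%:R / (#|{ffun 'I_m -> 'I_n}|)%:R.

(* Main.v *)
Require Import Defs.
From HB Require Import structures.
From mathcomp Require Import all_boot all_order all_algebra.
From mathcomp Require Import reals exp.
From mathcomp Require Import sequences.
From mathcomp Require Import ring lra zify.
Import Order.TTheory GRing.Theory Num.Theory.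
Local Open Scope ring_scope.

Set Implicit Arguments. Unset Strict Implicit. Unset Printing Implicit Defensive.


Definition trc (n m k : nat) (f : {ffun 'I_m -> 'I_n.+1}) : {ffun 'I_m -> 'I_n.+1} :=
  [ffun b => inord (minn (f b) k)].

Lemma pow_load (R : realType) n m (f : {ffun 'I_m -> 'I_n.+1}) i (W : R) :
  W ^+ load f i = \prod_b (if (f b < i)%N then W else 1).
Proof.
rewrite /load -prodr_const big_mkcond /=.
by apply: eq_bigr => b _; rewrite inE.
Qed.

Lemma fibre (R : realType) n m k i (g : {ffun 'I_m -> 'I_n.+1}) (W : R) :
  \sum_(f | trc k f == g) W ^+ load f i =
  \prod_b \sum_(j : 'I_n.+1 | inord (minn j k) == g b) (if (j < i)%N then W else 1).
Proof.
rewrite bigA_distr_big_dep /=.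
apply: eq_big => [f|f _]; last by rewrite pow_load.
apply/eqP/familyP => [<- b|H].
  by rewrite -topredE /= ffunE.
apply/ffunP => b; rewrite ffunE; apply/eqP.
by have := H b; rewrite -topredE /=.
Qed.

Lemma inord_min_eq n k (j gb : 'I_n.+1) : (k <= n)%N ->
  (inord (minn j k) == gb) = (minn j k == gb).
Proof.
move=> kn; rewrite -val_eqE /= inordK //.
by rewrite ltnS (leq_trans (geq_minr _ _)).
Qed.

Lemma coord_lt (R : realType) n k i (gb : 'I_n.+1) (W : R) :
  (k <= n)%N -> (gb < k)%N -> (k <= i)%N ->
  \sum_(j : 'I_n.+1 | inord (minn j k) == gb) (if (j < i)%N then W else 1) = W.
Proof.
move=> kn gk ki.
rewrite (eq_bigl (pred1 gb)); last first.
  move=> j /=; rewrite inord_min_eq //.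
  case: (ltnP j k) => jk.
    by rewrite ?(minn_idPl (ltnW jk)).
  rewrite ?(minn_idPr jk) (gtn_eqF gk); apply/esym/negbTE.
  by rewrite -val_eqE /= neq_ltn (leq_trans gk jk) orbT.
by rewrite big_pred1_eq (leq_trans gk ki).
Qed.

Lemma coord_gt (R : realType) n k i (gb : 'I_n.+1) (W : R) :
  (k <= n)%N -> (k < gb)%N ->
  \sum_(j : 'I_n.+1 | inord (minn j k) == gb) (if (j < i)%N then W else 1) = 0.
Proof.
move=> kn kg; rewrite big_pred0 // => j; rewrite inord_min_eq //.
apply/negbTE; rewrite neq_ltn; apply/orP; left.
by apply: leq_ltn_trans (geq_minr _ _) kg.
Qed.

Lemma coord_eq_pred n k (gb : 'I_n.+1) (j : 'I_n.+1) :
  (k <= n)%N -> nat_of_ord gb = k -> (inord (minn j k) == gb) = (k <= j)%N.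
Proof.
move=> kn gk; rewrite inord_min_eq // gk.
case: (ltnP j k) => jk.
  by rewrite ?(minn_idPl (ltnW jk)) (ltn_eqF jk).
by rewrite ?(minn_idPr jk) eqxx.
Qed.

Lemma coord_eq0 (R : realType) n k (gb : 'I_n.+1) (W : R) :
  (k <= n)%N -> nat_of_ord gb = k ->
  \sum_(j : 'I_n.+1 | inord (minn j k) == gb) (if (j < k)%N then W else 1)
   = (n.+1 - k)%:R.
Proof.
move=> kn gk.
rewrite (eq_bigl (fun j : 'I_n.+1 => predT (nat_of_ord j) && (k <= j)%N)); last first.
  by move=> j; rewrite coord_eq_pred.
rewrite -(big_geq_mkord k n.+1 predT (fun j => if (j < k)%N then W else 1)) /=.
rewrite big_nat_cond (eq_bigr (fun => 1)); last first.
  by move=> j /andP[/andP[kj _] _]; rewrite ltnNge kj.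
by rewrite -big_nat_cond sumr_const_nat.
Qed.

Lemma coord_eq1 (R : realType) n k (gb : 'I_n.+1) (W : R) :
  (k <= n)%N -> nat_of_ord gb = k ->
  \sum_(j : 'I_n.+1 | inord (minn j k) == gb) (if (j < k.+1)%N then W else 1)
   = W + (n - k)%:R.
Proof.
move=> kn gk.
rewrite (eq_bigl (fun j : 'I_n.+1 => predT (nat_of_ord j) && (k <= j)%N)); last first.
  by move=> j; rewrite coord_eq_pred.
rewrite -(big_geq_mkord k n.+1 predT (fun j => if (j < k.+1)%N then W else 1)) /= big_ltn ?ltnS // leqnn; congr (_ + _).
rewrite big_nat_cond (eq_bigr (fun => 1)); last first.
  by move=> j /andP[/andP[kj _] _]; rewrite ltnNge kj.
by rewrite -big_nat_cond sumr_const_nat subSS.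
Qed.
Lemma exp_up (R : realType) (y : R) : y <= 1/2 -> expR y <= 1 + y + 2 * y ^+ 2.
Proof.
move=> hy.
have h1 : expR y * (1 - y) <= 1.
  have := expR_ge1Dx (- y); rewrite -[(1 + - y)]/(1 - y) => h.
  have : expR y * (1 - y) <= expR y * expR (- y).
    by rewrite ler_pM2l ?expR_gt0.
  by rewrite -expRD subrr expR0.
have hpos : 0 < 1 - y by lra.
rewrite -(ler_pM2r hpos); apply: (le_trans h1).
have -> : (1 + y + 2 * y ^+ 2) * (1 - y) = 1 + y ^+ 2 * (1 - 2 * y) by ring.
rewrite lerDl; apply: mulr_ge0; first exact: sqr_ge0.
lra.
Qed.

Lemma expo_ineq (R : realType) (th mu v s s' q K N rho rho' ka : R) :
  N = q + K -> 0 <= K -> N <= 2 * (q - 1) -> 0 < N -> 0 <= s -> 0 <= s' -> s + s' = N * mu -> 0 <= mu ->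
  v = 16 * mu * th ^+ 2 ->
  rho = th * N / q -> rho' = th * N / (q - 1) ->
  ka = (rho' + 2 * rho' ^+ 2) / q ->
  - (rho' * ((K + 1) * mu)) - v * (K + 1) + ((rho' - rho) * s + ka * s')
    <= - (rho * (K * mu)) - v * K.
Proof.
move=> hN hK hq hNp hs hs' hss hmu hv hr hr' hka.
have q1 : 0 < q - 1 by lra.
have q0 : 0 < q by lra.
have lin : - (rho' * ((K + 1) * mu)) + (rho' - rho) * s + rho' / q * s' + rho * (K * mu) = 0.
  have -> : s = N * mu - s' by lra.
  rewrite hr' hr hN; field.
  by apply/andP; split; apply/negP => /eqP; lra.
have rem : 2 * rho' ^+ 2 / q * s' <= v.
  have h1 : 2 * rho' ^+ 2 / q * s' <= 2 * rho' ^+ 2 / q * (N * mu).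
    apply: ler_wpM2l; first by apply: divr_ge0; [apply: mulr_ge0; [lra|exact: sqr_ge0]|lra].
    lra.
  apply: (le_trans h1).
  have -> : 2 * rho' ^+ 2 / q * (N * mu) = 2 * th ^+ 2 * mu * (N / (q - 1)) ^+ 2 * (N / q).
    by rewrite hr'; field; apply/andP; split; apply/negP => /eqP; lra.
  have a1 : N / (q - 1) <= 2 by rewrite ler_pdivrMr //; lra.
  have a2 : N / q <= 2 by rewrite ler_pdivrMr //; lra.
  have a3 : 0 <= N / (q - 1) by apply: divr_ge0; lra.
  have a4 : 0 <= N / q by apply: divr_ge0; lra.
  have a5 : (N / (q - 1)) ^+ 2 <= 4.
    by rewrite expr2; have := ler_pM a3 a3 a1 a1; lra.
  have a6 : 0 <= 2 * th ^+ 2 * mu by apply: mulr_ge0; [apply: mulr_ge0; [lra|exact: sqr_ge0]|].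
  rewrite hv.
  have := ler_pM (mulr_ge0 a6 (sqr_ge0 _)) a4 (ler_wpM2l a6 a5) a2.
  lra.
have -> : ka * s' = rho' / q * s' + 2 * rho' ^+ 2 / q * s'.
  by rewrite hka; field; apply/negP => /eqP; lra.
lra.
Qed.

Lemma aux_mul (R : realType) (x y z w : R) : 0 <= y -> x * z <= w -> x * (y * z) <= w * y.
Proof. move=> y0 h; rewrite mulrCA mulrC; exact: ler_wpM2r. Qed.

Lemma sum_if (R : realType) m (P : pred 'I_m) (x y : R) :
  \sum_(b < m) (if P b then x else y) = x * #|P|%:R + y * (m - #|P|)%N%:R.
Proof.
rewrite (bigID P) /=.
rewrite (eq_bigr (fun => x)); last by move=> b ->.
rewrite [X in _ + X](eq_bigr (fun => y)); last by move=> b /negbTE ->.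
rewrite !sumr_const -[x *+ _]mulr_natr -[y *+ _]mulr_natr.
have hc := cardC P; rewrite card_ord in hc.
have e : #|(fun i : 'I_m => ~~ P i)| = (m - #|P|)%N.
  by rewrite -(addKn #|P| #|(fun i : 'I_m => ~~ P i)|); congr (_ - _)%N.
by rewrite e.
Qed.

Definition rho (R : realType) (n : nat) (th : R) (i : nat) : R :=
  th * n.+1%:R / (n.+1%:R - i%:R).

Definition Zfun (R : realType) (n m : nat) (th mu v : R) (i : nat)
  (f : {ffun 'I_m -> 'I_n.+1}) : R :=
  expR (- (rho n th i * (i%:R * mu)) - v * i%:R) * expR (rho n th i) ^+ load f i.

Lemma Zfun_fibre (R : realType) n m (th mu v : R) k i (g : {ffun 'I_m -> 'I_n.+1}) :
  \sum_(f | trc k f == g) Zfun th mu v i f =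
  expR (- (rho n th i * (i%:R * mu)) - v * i%:R) *
  \prod_b \sum_(j : 'I_n.+1 | inord (minn j k) == g b)
     (if (j < i)%N then expR (rho n th i) else 1).
Proof. by rewrite -mulr_sumr fibre. Qed.

Lemma SM_fibre (R : realType) n m (th mu v : R) k (g : {ffun 'I_m -> 'I_n.+1}) :
  (n.+1 <= 2 * (n - k))%N -> `|th| <= 1/16 -> mu = m%:R / n.+1%:R ->
  v = 16 * mu * th ^+ 2 ->
  \sum_(f | trc k f == g) Zfun th mu v k.+1 f <= \sum_(f | trc k f == g) Zfun th mu v k f.
Proof.
move=> hnk hth hmu hv.
have kn : (k <= n)%N.
  by case: (leqP k n) => // /ltnW; rewrite -subn_eq0 => /eqP e; move: hnk; rewrite e.
rewrite !Zfun_fibre.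
set N : R := n.+1%:R; set K : R := k%:R; set q := N - K.
set r := rho n th k; set r' := rho n th k.+1.
have hr : r = th * N / q by [].
have hr' : r' = th * N / (q - 1).
  by rewrite /r' /rho -/N -natr1 /q; congr (_ / _); ring.
have hq1 : N <= 2 * (q - 1).
  have : (n.+1%:R : R) <= (2 * (n - k))%:R by rewrite ler_nat.
  by rewrite natrM natrB // /N /q /K -natr1; lra.
have hN : 0 < N by rewrite /N ltr0n.
have hK : 0 <= K by rewrite /K ler0n.
have hr'b : r' <= 1/2.
  rewrite hr'.
  have q1 : 0 < q - 1 by lra.
  have a1 : N / (q - 1) <= 2 by rewrite ler_pdivrMr //; lra.
  have a3 : 0 <= N / (q - 1) by apply: divr_ge0; lra.
  have : th * (N / (q - 1)) <= `|th| * (N / (q - 1)).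
    by apply: ler_wpM2r => //; exact: ler_norm.
  have : `|th| * (N / (q - 1)) <= 1/16 * 2 by apply: ler_pM.
  rewrite mulrA; lra.
set ka := (r' + 2 * r' ^+ 2) / q.
set d := fun b : 'I_m => if (g b < k)%N then r' - r else ka.
set c' := fun b : 'I_m => \sum_(j : 'I_n.+1 | inord (minn j k) == g b)
     (if (j < k.+1)%N then expR r' else 1).
set c := fun b : 'I_m => \sum_(j : 'I_n.+1 | inord (minn j k) == g b)
     (if (j < k)%N then expR r else 1).
have hc0 : forall b, 0 <= c b.
  by move=> b; apply: sumr_ge0 => j _; case: ifP => _; rewrite ?expR_ge0.
have hc : forall b, 0 <= c' b <= c b * expR (d b).
  move=> b; apply/andP; split.
    by apply: sumr_ge0 => j _; case: ifP => _; rewrite ?expR_ge0.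
  rewrite /c /c' /d; case: (ltngtP (g b) k) => gk.
  - rewrite (coord_lt _ kn gk) // (coord_lt _ kn gk) //.
    by rewrite -expRD addrC subrK.
  - by rewrite (coord_gt _ _ kn gk) (coord_gt _ _ kn gk) mul0r.
  - rewrite (coord_eq1 _ kn gk) (coord_eq0 _ kn gk) ?ltnn.
    have e1 : ((n - k)%:R : R) = q - 1 by rewrite natrB // /q /N /K -natr1; ring.
    have e0 : ((n.+1 - k)%:R : R) = q by rewrite natrB ?(leq_trans kn) //.
    rewrite e1 e0.
    have q0 : 0 < q by lra.
    apply: (le_trans (lerD (exp_up hr'b) (lexx _))).
    apply: (le_trans _ (ler_wpM2l (ltW q0) (expR_ge1Dx ka))).
    rewrite mulrDr mulr1 /ka [q * _]mulrC divfK; last by apply/negP => /eqP; lra.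
    lra.
have hP : \prod_b c' b <= \prod_b (c b * expR (d b)).
  by apply: ler_prod => b _; exact: hc b.
rewrite big_split /= -expR_sum in hP.
apply: (le_trans (ler_wpM2l (expR_ge0 _) hP)).
have eP : \prod_(i < m) c i = \prod_b \sum_(j : 'I_n.+1 | inord (minn j k) == g b) (if (j < k)%N then expR r else 1) by [].
rewrite -eP.
apply: aux_mul; first by apply: prodr_ge0 => b _; exact: hc0.
rewrite -expRD ler_expR.
rewrite /d sum_if -natr1.
have hm : (#|(fun b : 'I_m => (g b < k)%N)| <= m)%N by rewrite -[m in (_ <= m)%N]card_ord max_card.
apply: (@expo_ineq _ th mu v _ _ q K N) => //.
- by rewrite /q; ring.
- rewrite -natrD subnKC // hmu /N mulrC divfK //.
  by rewrite pnatr_eq0.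
- by rewrite hmu divr_ge0 // ler0n.
Qed.


Definition Pst (T : finType) (E : nat -> pred T) (N : nat) (f : T) : bool :=
  [exists j : 'I_N.+1, E j f].

Lemma PstS (T : finType) (E : nat -> pred T) N f :
  Pst E N.+1 f = Pst E N f || E N.+1 f.
Proof.
apply/existsP/orP.
- case=> j Ej.
  have := ltn_ord j; rewrite ltnS leq_eqVlt => /orP[/eqP ej|ljN].
    by right; rewrite -ej.
  by left; apply/existsP; exists (Ordinal ljN).
- case=> [/existsP [j Ej]|EN].
    by exists (widen_ord (leqnSn _) j).
  by exists ord_max.
Qed.

Lemma maxineq (R : realType) (T : finType) (tr : nat -> T -> T) (Z : nat -> T -> R)
  (E : nat -> pred T) (I : nat) (L : R) :
 (forall i f, 0 <= Z i f) ->
 (forall j i f f', (j <= i)%N -> (i <= I)%N -> tr i f = tr i f' -> E j f = E j f') ->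
 (forall i (A : pred T), (i < I)%N -> (forall f f', tr i f = tr i f' -> A f = A f') ->
     \sum_(f | A f) Z i.+1 f <= \sum_(f | A f) Z i f) ->
 (forall i f, (i <= I)%N -> E i f -> L <= Z i f) ->
 #|[set f | Pst E I f]|%:R * L <= \sum_f Z 0 f.
Proof.
move=> Z0 Emeas SM EZ.
have key : forall N, (N <= I)%N ->
   \sum_f (if Pst E N f then L else Z N f) <= \sum_f Z 0 f.
  elim=> [|N IH] NI.
    apply: ler_sum => f _; rewrite /Pst.
    case: ifP => // /existsP [j Ej].
    by move: Ej; rewrite (ord1 j) => Ej; apply: EZ.
  apply: le_trans (IH (ltnW NI)).
  apply: (@le_trans _ _ (\sum_f (if Pst E N f then L else Z N.+1 f))).
    apply: ler_sum => f _; rewrite PstS.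
    case: (Pst E N f) => //=.
    by case: ifP => // EN; apply: EZ.
  rewrite [X in X <= _](bigID (Pst E N)) [X in _ <= X](bigID (Pst E N)) /=.
  apply: lerD.
    rewrite (eq_bigr (fun=> L)); last by move=> f ->.
    by rewrite [X in _ <= X](eq_bigr (fun=> L)) //; move=> f ->.
  rewrite (eq_bigr (fun f => Z N.+1 f)); last by move=> f /negbTE ->.
  rewrite [X in _ <= X](eq_bigr (fun f => Z N f)); last by move=> f /negbTE ->.
  apply: (SM N (fun f => ~~ Pst E N f)) => // f f' eqf.
  congr negb; apply: eq_existsb => j.
  by apply: (Emeas _ N) => //; [rewrite -ltnS | apply: ltnW].
apply: le_trans (key I (leqnn I)).
rewrite -sum1_card natr_sum mulr_suml.
rewrite [X in _ <= X](bigID (Pst E I)) /= -[X in X <= _]addr0.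
apply: lerD.
  rewrite [X in _ <= X](eq_bigr (fun=> L)); last by move=> f ->.
  rewrite (eq_big (Pst E I) (fun=> L)) //; first by move=> f; rewrite inE.
  by move=> f _; rewrite mul1r.
by apply: sumr_ge0 => f /negbTE ->.
Qed.


Lemma trc_idem n m k (f : {ffun 'I_m -> 'I_n.+1}) : (k <= n)%N -> trc k (trc k f) = trc k f.
Proof.
move=> kn; apply/ffunP => b; rewrite !ffunE; congr inord.
rewrite inordK; first by rewrite -minnA minnn.
by rewrite ltnS (leq_trans (geq_minr _ _)).
Qed.

Lemma min_lt x i j : (j <= i)%N -> (minn x i < j)%N = (x < j)%N.
Proof.
move=> ji; case: (leqP i x) => h.
  by rewrite ltnNge ji ltnNge (leq_trans ji h).
by [].
Qed.

Lemma load_meas n m (f f' : {ffun 'I_m -> 'I_n.+1}) i j :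
  (j <= i)%N -> (i <= n)%N -> trc i f = trc i f' -> load f j = load f' j.
Proof.
move=> ji iN e; rewrite /load; apply: eq_card => b; rewrite !inE.
have := congr1 (fun h : {ffun 'I_m -> 'I_n.+1} => nat_of_ord (h b)) e; rewrite /= !ffunE /= !inordK;
  try by rewrite ltnS (leq_trans (geq_minr _ _)).
by move=> H; rewrite -(min_lt (f b) ji) H min_lt.
Qed.

Lemma SM_meas (R : realType) n m (th mu v : R) k (A : pred {ffun 'I_m -> 'I_n.+1}) :
  (n.+1 <= 2 * (n - k))%N -> `|th| <= 1/16 -> mu = m%:R / n.+1%:R ->
  v = 16 * mu * th ^+ 2 ->
  (forall f f', trc k f = trc k f' -> A f = A f') ->
  \sum_(f | A f) Zfun th mu v k.+1 f <= \sum_(f | A f) Zfun th mu v k f.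
Proof.
move=> hnk hth hmu hv hA.
have kn : (k <= n)%N by lia.
rewrite (partition_big (trc k) predT) // [X in _ <= X](partition_big (trc k) predT) //.
apply: ler_sum => g _.
case Ag: (A g).
  have eq : forall f, (A f && (trc k f == g)) = (trc k f == g).
    move=> f; case: eqP => e; rewrite ?andbF ?andbT //.
    by rewrite (hA f g) // -e trc_idem.
  rewrite !(eq_bigl _ _ eq).
  exact: SM_fibre.
have eq : forall f, (A f && (trc k f == g)) = false.
  move=> f; case: eqP => e; rewrite ?andbF ?andbT //.
  by rewrite (hA f g) // -e trc_idem.
by rewrite !big_pred0.
Qed.

Lemma half_bound (R : realType) n m (th L : R) : `|th| <= 1/16 ->
  #|[set f : {ffun 'I_m -> 'I_n.+1} |
      Pst (fun i f => L <= Zfun th (m%:R / n.+1%:R) (16 * (m%:R / n.+1%:R) * th ^+ 2) i f)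
          (n.+1 %/ 2)%N f]|%:R * L <= (n.+1 ^ m)%:R.
Proof.
move=> hth.
set mu := m%:R / n.+1%:R; set v := 16 * mu * th ^+ 2.
have -> : ((n.+1 ^ m)%:R : R) = \sum_(f : {ffun 'I_m -> 'I_n.+1}) Zfun th mu v 0 f.
  rewrite (eq_bigr (fun => 1)); last first.
    move=> f _; rewrite /Zfun.
    have -> : load f 0 = 0%N by rewrite /load; apply: eq_card0 => b; rewrite inE.
    by rewrite !(mulr0, mul0r, oppr0, addr0, expR0, expr0, mulr1).
  by rewrite sumr_const card_ffun !card_ord.
apply: (maxineq (tr := fun i => @trc n m i)).
- by move=> i f; apply: mulr_ge0; [exact: expR_ge0 | apply: exprn_ge0; exact: expR_ge0].
- move=> j i f f' ji iI e /=.
  by rewrite /Zfun (@load_meas n m f f' i j) //; lia.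
- move=> i A iI hA; apply: SM_meas => //; lia.
- by [].
Qed.


Lemma core (R : realType) (x k mu t N A : R) : 1 < x -> 0 <= k -> 0 <= mu -> 0 <= t -> t < N ->
  t * mu / x + k * x <= A ->
  k / 16 <= (1 / (16 * x)) * N / (N - t) * A - 16 * mu * (1 / (16 * x)) ^+ 2 * t.
Proof.
move=> hx hk hmu ht htN hA.
have x0 : 0 < x by lra.
have hA0 : 0 <= A.
  apply: le_trans hA; apply: addr_ge0; last by apply: mulr_ge0; lra.
  by apply: divr_ge0; [apply: mulr_ge0|lra].
have g1 : 1 <= N / (N - t) by rewrite ler_pdivlMr; lra.
have th0 : 0 < 1 / (16 * x) by apply: divr_gt0; lra.
have s1 : (1 / (16 * x)) * A <= (1 / (16 * x)) * N / (N - t) * A.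
  have -> : 1 / (16 * x) * N / (N - t) * A = (1 / (16 * x) * A) * (N / (N - t)).
    by ring.
  rewrite -[X in X <= _]mulr1; apply: ler_wpM2l => //.
  by apply: mulr_ge0 => //; lra.
have s2 : (1 / (16 * x)) * (t * mu / x + k * x) <= (1 / (16 * x)) * A.
  by apply: ler_wpM2l => //; lra.
have e : (1 / (16 * x)) * (t * mu / x + k * x) - 16 * mu * (1 / (16 * x)) ^+ 2 * t = k / 16.
  by field; apply/negP => /eqP; lra.
lra.
Qed.

Lemma final_real (R : realType) (k : R) : 32 <= k -> 2 * expR (- (k / 16)) <= powR 2 (- (1 / 32 * k)).
Proof.
move=> hk.
have n2 : (2 : R) != 0 by rewrite pnatr_eq0.
rewrite /powR (negbTE n2).
have ln2 : ln (2 : R) <= 1.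
  rewrite -[X in _ <= X](expRK 1) ler_ln ?posrE ?expR_gt0 //.
  by have := expR_ge1Dx (1 : R); lra.
have h1 : expR (- (k / 32)) <= expR (- (1 / 32 * k) * ln 2).
  rewrite ler_expR.
  have kp : 0 <= k / 32 by lra.
  have := ler_wpM2l kp ln2.
  have -> : - (1 / 32 * k) * ln 2 = - (k / 32 * ln 2) by ring.
  lra.
apply: le_trans h1.
have -> : - (k / 32) = k / 32 + - (k / 16) by lra.
rewrite expRD; apply: ler_wpM2r; first exact: expR_ge0.
by have := expR_ge1Dx (k / 32); lra.
Qed.

Lemma frac_bound (R : realType) (b s1 s2 P L : R) : 0 < P -> 0 < L -> b <= s1 + s2 ->
  s1 * L <= P -> s2 * L <= P -> b / P <= 2 * L^-1.
Proof.
move=> P0 L0 hb h1 h2.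
rewrite ler_pdivrMr //.
have e : 2 * L^-1 * P = (P + P) / L by field; apply/negP => /eqP; lra.
rewrite e ler_pdivlMr //.
have := ler_wpM2r (ltW L0) hb.
lra.
Qed.


Lemma Zfun_exp (R : realType) n m (th mu v : R) i (f : {ffun 'I_m -> 'I_n.+1}) :
  Zfun th mu v i f = expR (rho n th i * ((load f i)%:R - i%:R * mu) - v * i%:R).
Proof. by rewrite /Zfun -expRM_natl -expRD; congr expR; ring. Qed.

Lemma load_rev n m (f : {ffun 'I_m -> 'I_n.+1}) i : (i <= n.+1)%N ->
  (load [ffun b => rev_ord (f b)] (n.+1 - i) + load f i = m)%N.
Proof.
move=> hi; rewrite /load.
have -> : [set b | ([ffun b => rev_ord (f b)] b < n.+1 - i)%N] = ~: [set b | (f b < i)%N].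
  apply/setP => b; rewrite !inE ffunE /=.
  have := ltn_ord (f b).
  case: (ltnP (f b) i) => h hb /=; lia.
by rewrite addnC cardsC card_ord.
Qed.

Lemma nat_iI (i n : nat) : (2 * i <= n.+1)%N -> (i < (n.+1 %/ 2).+1)%N.
Proof. lia. Qed.
Lemma nat_ilt (i n : nat) : (2 * i <= n.+1)%N -> (i < n.+1)%N.
Proof. lia. Qed.
Lemma nat_jI (i n : nat) : (n.+1 < 2 * i)%N -> (n.+1 - i < (n.+1 %/ 2).+1)%N.
Proof. lia. Qed.
Lemma nat_ipos (i n : nat) : (n.+1 < 2 * i)%N -> (0 < i)%N.
Proof. lia. Qed.

Unset Implicit Arguments.

Theorem mainTheorem2 (R : realType) (a b : R) (ha : 0 < a) (hab : a <= b) :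
  exists c : R, 0 < c /\ exists k0 : R,
    forall (n m : nat), (0 < n)%N ->
      a * n%:R <= m%:R -> m%:R <= b * n%:R ->
      forall x k : R, 1 < x -> 1 <= k -> k0 <= k ->
        bad_prob n m x k <= powR 2 (- (c * k)).
Proof.
exists (1 / 32); split; first by lra.
exists 32 => n m n0 _ _ x k hx hk1 hk0.
case: n n0 => [//|n] _.
set L := expR (k / 16).
set mu : R := m%:R / n.+1%:R.
have hL : 0 < L by exact: expR_gt0.
have hN : (0 : R) < n.+1%:R by rewrite ltr0n.
have hmu : 0 <= mu by rewrite divr_ge0 ?ler0n.
have hmN : (m%:R : R) = n.+1%:R * mu by rewrite /mu mulrC divfK // gt_eqF.
have x0 : 0 < x by lra.
set c0 : R := 1 / (16 * x).
have c0p : 0 < c0 by rewrite /c0 divr_gt0 //; lra.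
have c0le : c0 <= 1 / 16.
  rewrite /c0 ler_pdivrMr; last by lra.
  rewrite mulrC mulrA ler_pdivlMr; lra.
have hth1 : `|c0| <= 1 / 16 by rewrite ger0_norm // ltW.
have hth2 : `|- c0| <= 1 / 16 by rewrite normrN.
set I := (n.+1 %/ 2)%N.
pose E (th : R) := fun i (f : {ffun 'I_m -> 'I_n.+1}) =>
   L <= Zfun th mu (16 * mu * th ^+ 2) i f.
pose rv := fun f : {ffun 'I_m -> 'I_n.+1} => [ffun b => rev_ord (f b)] : {ffun 'I_m -> 'I_n.+1}.
set S1 := [set f | Pst (E c0) I f].
set S2 := [set f | Pst (E (- c0)) I f].
have c1 : #|S1|%:R * L <= (n.+1 ^ m)%:R := @half_bound R n m c0 L hth1.
have c2 : #|S2|%:R * L <= (n.+1 ^ m)%:R := @half_bound R n m (- c0) L hth2.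
have rvK : involutive rv by move=> f; apply/ffunP => bb; rewrite !ffunE rev_ordK.
have cS2 : #|rv @^-1: S2| = #|S2| by apply: card_preimset; exact: inv_inj.
have sub : bad_event n.+1 m x k \subset S1 :|: rv @^-1: S2.
  apply/subsetP => f; rewrite inE => /existsP [i hi].
  rewrite in_setU !inE.
  case: (leqP (2 * i) n.+1) => h2i.
    apply/orP; left; apply/existsP.
    have iI : (i < I.+1)%N by exact: nat_iI.
    exists (Ordinal iI); rewrite /E /= Zfun_exp ler_expR /rho.
    have k0 : 0 <= k by lra.
    have t0 : (0 : R) <= i%:R by rewrite ler0n.
    have tN : (i%:R : R) < n.+1%:R by rewrite ltr_nat; exact: nat_ilt.
    have hA : i%:R * mu / x + k * x <= (load f i)%:R - i%:R * mu.
      by move: hi; rewrite -/mu; lra.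
    exact: (core hx k0 hmu t0 tN hA).
  apply/orP; right; apply/existsP.
  have jI : (n.+1 - i < I.+1)%N by exact: nat_jI.
  exists (Ordinal jI); rewrite /E /= Zfun_exp ler_expR /rho.
  have hi' : (i <= n.+1)%N by rewrite -ltnS ltn_ord.
  have lr := load_rev f hi'.
  set S := load f i in hi lr; set S' := load _ _ in lr *.
  have eS : (S'%:R : R) = m%:R - S%:R by rewrite -lr natrD addrK.
  have ej : ((n.+1 - i)%N%:R : R) = n.+1%:R - i%:R by rewrite natrB.
  rewrite eS ej sqrrN.
  set t : R := n.+1%:R - i%:R.
  have -> : - c0 * n.+1%:R / (n.+1%:R - t) * (m%:R - S%:R - t * mu) =
            c0 * n.+1%:R / (n.+1%:R - t) * (t * mu - (m%:R - S%:R)) by ring.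
  have k0 : 0 <= k by lra.
  have t0 : 0 <= t by rewrite /t subr_ge0 ler_nat.
  have tN : t < n.+1%:R.
    have : (0 : R) < i%:R by rewrite ltr0n; exact: nat_ipos h2i.
    rewrite /t; lra.
  have hA : t * mu / x + k * x <= t * mu - (m%:R - S%:R).
    have hij : t <= i%:R.
      have h2 : (n.+1 <= 2 * i)%N by exact: ltnW.
      move: h2; rewrite -(ler_nat R) natrM => h2r; rewrite /t; lra.
    have hm : 0 <= (i%:R - t) * (mu / x).
      by apply: mulr_ge0; [lra | apply: divr_ge0; lra].
    have hmN' : (m%:R : R) = (t + i%:R) * mu by rewrite hmN /t; congr (_ * _); ring.
    move: hi; rewrite -/mu hmN'; lra.
  exact: (core hx k0 hmu t0 tN hA).
have hb : (#|bad_event n.+1 m x k| <= #|S1| + #|S2|)%N.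
  rewrite -cS2; apply: leq_trans (subset_leq_card sub) _.
  exact: (leq_card_setU _ _).1.
rewrite /bad_prob card_ffun !card_ord.
apply: le_trans (final_real hk0).
rewrite expRN -/L.
apply: (frac_bound (s1 := #|S1|%:R) (s2 := #|S2|%:R)) => //.
- by rewrite ltr0n expn_gt0.
- by rewrite -natrD ler_nat.
Qed.
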